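(* There exist a finite alphabet $\Sigma$ and a set $L\subseteq\mathcal{T}_\Sigma$ of infinite $\Sigma$-labeled binary trees recognized by a deterministic automaton such that $\mu(L)$ is an irrational number.
   Context: The full binary tree is $V=\{L,R\}^*$ (root $\epsilon$). A $\Sigma$-tree is a map $t:V\to\Sigma$, and $\mathcal{T}_\Sigma=\Sigma^V$. The coin-flipping measure $\mu$ on $\mathcal{T}_\Sigma$ is the product probability measure with $\mu(\{t : t(v_1)=a_1,\dots,t(v_k)=a_k\})=|\Sigma|^{-k}$ for pairwise distinct $v_i$. An alternating parity tree automaton is $\mathcal{A}=\langle\Sigma,Q,q_0,\delta,\pi\rangle$ with finite $Q$, $q_0\in Q$, $\pi:Q\to\omega$ and $\delta(q,a)$ a positive Boolean combination (using $\wedge,\vee$) of elements of $\{L,R\}\times Q$. A tree $t$ is accepted if player $\exists$ wins the game starting at $\langle\epsilon,q_0\rangle$ in which: from $\langle x,q\rangle$ the game moves to $\langle x,\delta(q,t(x))\rangle$; at a disjunction $\exists$ chooses a disjunct, at a conjunction $\forall$ chooses a conjunct; $\langle x,(D,q)\rangle$ moves to $\langle xD,q\rangle$ for $D\in\{L,R\}$; an infinite play is won by $\exists$ iff the largest priority $\pi(q)$ among states $q$ visited infinitely often (in positions $\langle x,q\rangle$) is even. A deterministic automaton is one in which every $\delta(q,a)$ has the form $(L,q_L)\wedge(R,q_R)$. *)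

(* Defs.v *)
From Stdlib Require Import Reals ZArith.
From mathcomp Require Import all_boot.

Set Implicit Arguments.
Unset Strict Implicit.
Unset Printing Implicit Defensive.

Inductive dir := dirL | dirR.
Definition vertex := seq dir.                 (* root = [::], child xD = rcons x D *)
Definition tree (Sigma : Type) := vertex -> Sigma.

Inductive pbf (Q : Type) :=
| Atom of dir & Q
| And of pbf Q & pbf Q
| Or of pbf Q & pbf Q.
Arguments Atom {Q}. Arguments And {Q}. Arguments Or {Q}.

Record automaton (Sigma Q : finType) := Automaton {
  init : Q;
  delta : Q -> Sigma -> pbf Q;
  pri : Q -> nat }.

Definition deterministic (Sigma Q : finType) (A : automaton Sigma Q) : Prop :=
  forall q a, exists qL qR, delta A q a = And (Atom dirL qL) (Atom dirR qR).

(* positions of the acceptance game *)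
Inductive pos (Q : Type) :=
| PState of vertex & Q
| PForm of vertex & pbf Q.
Arguments PState {Q}. Arguments PForm {Q}.

Definition move (Sigma Q : finType) (A : automaton Sigma Q) (t : tree Sigma)
    (p p' : pos Q) : Prop :=
  match p with
  | PState x q => p' = PForm x (delta A q (t x))
  | PForm x (Atom D q) => p' = PState (rcons x D) q
  | PForm x (And a b) => p' = PForm x a \/ p' = PForm x b
  | PForm x (Or a b) => p' = PForm x a \/ p' = PForm x b
  end.

(* history of the play up to (and including) step n *)
Definition hist (Q : Type) (p : nat -> pos Q) (n : nat) : seq (pos Q) :=
  map p (iota 0 n.+1).

(* strategies of player Exists: at a disjunction, given the history,
   choose the left (true) or right (false) disjunct *)
Definition strategy (Q : Type) := seq (pos Q) -> bool.

Definition consistent (Sigma Q : finType) (A : automaton Sigma Q)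
    (t : tree Sigma) (s : strategy Q) (p : nat -> pos Q) : Prop :=
  p 0 = PState [::] (init A) /\
  forall n, move A t (p n) (p n.+1) /\
    (forall x a b, p n = PForm x (Or a b) ->
        p n.+1 = PForm x (if s (hist p n) then a else b)).

Definition inf_often (Q : Type) (p : nat -> pos Q) (q : Q) : Prop :=
  forall N, exists n x, (N <= n)%N /\ p n = PState x q.

Definition winning (Sigma Q : finType) (A : automaton Sigma Q)
    (p : nat -> pos Q) : Prop :=
  exists q, inf_often p q /\ ~~ odd (pri A q) /\
    forall q', inf_often p q' -> (pri A q' <= pri A q)%N.

Definition accepts (Sigma Q : finType) (A : automaton Sigma Q)
    (t : tree Sigma) : Prop :=
  exists s : strategy Q, forall p, consistent A t s p -> winning A p.

Definition lang (Sigma Q : finType) (A : automaton Sigma Q) : tree Sigma -> Prop :=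
  fun t => accepts A t.

Open Scope R_scope.

(* basic cylinder: trees agreeing with f on all vertices of length < n
   (there are 2^n - 1 such vertices) *)
Definition cyl (Sigma : finType) (n : nat) (f : tree Sigma) : tree Sigma -> Prop :=
  fun t => forall v : vertex, (size v < n)%N -> t v = f v.

Definition cyl_weight (Sigma : finType) (n : nat) : R :=
  / (INR #|Sigma|) ^ (2 ^ n - 1)%nat.

Definition covers (Sigma : finType) (X : tree Sigma -> Prop)
    (ns : nat -> nat) (fs : nat -> tree Sigma) : Prop :=
  forall t, X t -> exists i, cyl (ns i) (fs i) t.

Fixpoint psum (Sigma : finType) (ns : nat -> nat) (N : nat) : R :=
  match N with
  | O => 0
  | S N' => psum Sigma ns N' + cyl_weight Sigma (ns N')
  end.

(* mu^*(X) = r : r is the infimum, over countable covers of X by basic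
   cylinders, of the total weight of the cover *)
Definition outer_measure_is (Sigma : finType) (X : tree Sigma -> Prop) (r : R)
    : Prop :=
  (forall ns fs, covers X ns fs ->
     forall r', r' < r -> exists N, r' < psum Sigma ns N) /\
  (forall eps, 0 < eps -> exists ns fs, covers X ns fs /\
     forall N, psum Sigma ns N <= r + eps).

(* X is measurable for the (completed) coin-flipping measure with mu(X) = r:
   outer measure of X is r and outer measure of its complement is 1 - r *)
Definition measure_is (Sigma : finType) (X : tree Sigma -> Prop) (r : R) : Prop :=
  outer_measure_is X r /\ outer_measure_is (fun t => ~ X t) (1 - r).

Definition irrational (r : R) : Prop :=
  ~ exists (p : Z) (q : positive), r = IZR p / IZR (Zpos q).

(* Main.v *)
Require Import Defs.
From Stdlib Require Import Reals Lra Lia ClassicalEpsilon ClassicalDescription FunctionalExtensionality Classical.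
From Stdlib Require List.
From mathcomp Require Import all_boot zify.

Definition Tr := tree (option bool).
Definition t0 : Tr := fun _ => None.
Definition nextq (q a : option bool) : option bool :=
  match q with None => a | Some b => Some b end.
Definition subt (D : dir) (t : Tr) : Tr := fun v => t (D :: v).
Fixpoint run_from (q : option bool) (t : Tr) (v : vertex) : option bool :=
  match v with [::] => q | D :: v' => run_from (nextq q (t [::])) (subt D t) v' end.
Definition run (t : Tr) v := run_from None t v.

Lemma run_rcons q t x D : run_from q t (rcons x D) = nextq (run_from q t x) (t x).
Proof. by elim: x q t => [|D' x IH] q t //=. Qed.

Definition dlt (q a : option bool) : pbf (option bool) :=
  And (Atom dirL (nextq q a)) (Atom dirR (nextq q a)).
Definition prio (q : option bool) : nat := match q with Some false => 1%N | _ => 0%N end.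
Definition Aut : automaton (option bool) (option bool) :=
  @Automaton (option bool) (option bool) None dlt prio.

Lemma Aut_det : deterministic Aut.
Proof. move=> q a; by exists (nextq q a), (nextq q a). Qed.

Section Game.
Variable t : Tr.
Variable p : nat -> Defs.pos (option bool).
Hypothesis p0 : p 0%N = PState [::] None.
Hypothesis pm : forall n, move Aut t (p n) (p n.+1).

Definition Inv (z : Defs.pos (option bool)) : Prop :=
  match z with
  | PState x q => q = run t x
  | PForm x phi => phi = dlt (run t x) (t x) \/
       exists D, phi = Atom D (nextq (run t x) (t x))
  end.

Lemma inv_all n : Inv (p n).
Proof.
elim: n => [|n IH]; first by rewrite p0.
have := pm n; case E: (p n) IH => [x q|x phi] /= IH.
  move=> ->; left; by rewrite IH.
case: IH => [->|[D ->]] /=.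
  by case=> ->; right; [exists dirL|exists dirR].
move=> -> /=; by rewrite /run run_rcons.
Qed.

Lemma state_late n : exists m x q, (n <= m)%N /\ p m = PState x q.
Proof.
have := inv_all n; have := pm n; have := pm n.+1.
case E: (p n) => [x q|x phi] /=.
  move=> _ _ _; by exists n, x, q.
move=> H1 H2 [Hphi|[D Hphi]]; subst phi.
  case: H2 => H2; rewrite H2 /= in H1; exists n.+2; eexists; eexists; split; eauto.
exists n.+1; eexists; eexists; split; eauto; by rewrite H2.
Qed.
End Game.

Lemma accept_iff t : lang Aut t <-> ~ exists x, run t x = Some false.
Proof.
split.
- move=> [s Hs] [x Hx].
  set vk := fun k => mkseq (fun i => nth dirL x i) k.
  have vkS : forall k, vk k.+1 = rcons (vk k) (nth dirL x k).
    by move=> k; rewrite /vk /mkseq -addn1 iotaD map_cat /= add0n cats1.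
  pose step (z : Defs.pos (option bool)) : Defs.pos (option bool) :=
    match z with
    | PState y q => PForm y (dlt q (t y))
    | PForm y (And a b) => PForm y (if nth dirL x (size y) is dirL then a else b)
    | PForm y (Or a b) => PForm y a
    | PForm y (Atom D q) => PState (rcons y D) q
    end.
  pose p := fix p n := match n with 0%N => PState [::] None | n'.+1 => step (p n') end.
  have pm : forall n, move Aut t (p n) (p n.+1).
    move=> n; rewrite [p n.+1]/= -/(p n); case: (p n) => [y q|y phi] //.
    case: phi => [D q|a b|a b] //=; try case: (nth dirL x (size y)); auto.
  have p3 : forall k, p (3 * k)%N = PState (vk k) (run t (vk k)).
    elim=> [|k IH] //.
    have -> : (3 * k.+1 = (3 * k).+3)%N by rewrite mulnS.
    rewrite /= -/(p (3*k)%N) IH /= /dlt.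
    have -> : size (vk k) = k by rewrite /vk size_mkseq.
    by rewrite vkS /run run_rcons; case: (nth dirL x k).
  have bad : forall k, (size x <= k)%N -> run t (vk k) = Some false.
    move=> k; elim: k => [|k IH].
      rewrite leqn0 => /eqP Hx0; rewrite /vk; move: Hx; by rewrite (size0nil Hx0).
    rewrite leq_eqVlt => /orP [/eqP <-|Hlt].
      by rewrite /vk mkseq_nth.
    by rewrite vkS /run run_rcons -/(run t (vk k)) IH.
  have cons : consistent Aut t s p.
    split=> // n; split=> // y a b.
    have := @inv_all t p erefl pm n.
    by case: (p n) => // y' phi [->|[D ->]].
  have [q [Hinf [Hev Hmax]]] := Hs p cons.
  have : inf_often p (Some false).
    move=> N; exists (3 * (N + size x))%N, (vk (N + size x))%N; split.
      lia.
    rewrite p3 bad //; exact: leq_addl.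
  move/Hmax; case: q Hev {Hinf Hmax} => [[]|] //.
- move=> Hn; exists (fun _ => true) => p [p0 Hp].
  have pm : forall n, move Aut t (p n) (p n.+1) by move=> n; case: (Hp n).
  have nobad : forall q, inf_often p q -> q <> Some false.
    move=> q Hq Eq; subst q; case: (Hq 0%N) => n [y [_ Hy]].
    have := @inv_all t p p0 pm n; rewrite Hy /= => Hr; apply: Hn; by exists y.
  have Hle : forall q', inf_often p q' -> (prio q' <= 0)%N.
    by move=> [[]|] // /nobad.
  case: (classic (inf_often p None)) => HN.
    by exists None.
  exists (Some true); split=> //.
  have [N0 HN0] : exists N0, forall n y, (N0 <= n)%N -> p n <> PState y None.
    apply: NNPP => C; apply: HN => N.
    apply: NNPP => C2; apply: C; exists N => n y Hnn Hp'; apply: C2; by exists n, y.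
  move=> N; have [m [y [q [Hm Hpm]]]] := @state_late t p p0 pm (maxn N N0).
  exists m, y; split; first by apply: leq_trans Hm; rewrite leq_maxl.
  rewrite Hpm; case: q Hpm => [[]|] // Hpm.
    have := @inv_all t p p0 pm m; rewrite Hpm /= => Hr; case: Hn; by exists y.
  by case: (HN0 m y) => //; apply: leq_trans Hm; rewrite leq_maxr.
Qed.

Definition join (a : option bool) (l r : Tr) : Tr := fun v =>
  match v with [::] => a | dirL :: v' => l v' | dirR :: v' => r v' end.
Definition sum3 (h : option bool -> R) := h None + h (Some true) + h (Some false).
Fixpoint Ex (n : nat) (f : Tr -> R) : R :=
  match n with 0%N => f t0
  | n'.+1 => /3 * sum3 (fun a => Ex n' (fun l => Ex n' (fun r => f (join a l r)))) end.
Definition agree n (t s : Tr) := forall v : vertex, (size v < n)%N -> t v = s v.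
Definition Ind (P : Prop) : R := if excluded_middle_informative P then 1 else 0.
Definition w (n : nat) : R := / 3 ^ (2 ^ n - 1)%N.

Lemma Ex_congr n f g : (forall t, f t = g t) -> Ex n f = Ex n g.
Proof. by move=> H; rewrite (functional_extensionality f g H). Qed.

Lemma Ex_const n c : Ex n (fun _ => c) = c.
Proof.
elim: n => [|n IH] //=.
have E1 : Ex n (fun l : Tr => Ex n (fun r : Tr => c)) = c.
  transitivity (Ex n (fun _ : Tr => c)); [apply: Ex_congr => l; apply: IH | apply: IH].
rewrite /sum3 !E1. field.
Qed.

Lemma Ex_le n f g : (forall t, f t <= g t) -> Ex n f <= Ex n g.
Proof.
elim: n f g => [|n IH] f g H /=; first exact: H.
apply: Rmult_le_compat_l; first lra.
rewrite /sum3; repeat apply: Rplus_le_compat; apply: (IH) => l; apply: (IH) => r; apply: H.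
Qed.

Lemma Ex_plus n f g : Ex n (fun t => f t + g t) = Ex n f + Ex n g.
Proof.
elim: n f g => [|n IH] f g //=.
have E1 : forall a, Ex n (fun l => Ex n (fun r => f (join a l r) + g (join a l r))) =
  Ex n (fun l => Ex n (fun r => f (join a l r))) + Ex n (fun l => Ex n (fun r => g (join a l r))).
  by move=> a; rewrite -IH; apply: Ex_congr => l; apply: IH.
rewrite /sum3 !E1. ring.
Qed.

Lemma Ex_scal n c f : Ex n (fun t => c * f t) = c * Ex n f.
Proof.
elim: n f => [|n IH] f //=.
have E1 : forall a, Ex n (fun l => Ex n (fun r => c * f (join a l r))) =
  c * Ex n (fun l => Ex n (fun r => f (join a l r))).
  by move=> a; rewrite -IH; apply: Ex_congr => l; apply: IH.
rewrite /sum3 !E1. ring.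
Qed.

Lemma Ex_minus n f g : Ex n (fun t => f t - g t) = Ex n f - Ex n g.
Proof.
rewrite /Rminus Ex_plus.
rewrite (Ex_congr n (fun t => - g t) (fun t => (-1) * g t)); last by move=> t; ring.
rewrite Ex_scal; ring.
Qed.

Definition detm n (f : Tr -> R) := forall t s, agree n t s -> f t = f s.

Lemma agree_join n a l l' r r' : agree n l l' -> agree n r r' ->
  agree n.+1 (join a l r) (join a l' r').
Proof. by move=> Hl Hr [|[] v] //= Hv; [apply: Hl|apply: Hr]. Qed.

Lemma agree_refl n t : agree n t t. Proof. by []. Qed.

Lemma Ex_S n f : detm n f -> Ex n.+1 f = Ex n f.
Proof.
elim: n f => [|n IH] f Hf.
  rewrite /= /sum3 !(Hf _ t0) //; first field.
have inner : forall a l, Ex n.+1 (fun r => f (join a l r)) = Ex n (fun r => f (join a l r)).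
  move=> a l; apply: IH => r r' H; apply: Hf; exact: agree_join.
have outer : forall a, Ex n.+1 (fun l => Ex n (fun r => f (join a l r))) =
   Ex n (fun l => Ex n (fun r => f (join a l r))).
  move=> a; apply: IH => l l' H; apply: Ex_congr => r; apply: Hf; exact: agree_join.
change (/3 * sum3 (fun a => Ex n.+1 (fun l => Ex n.+1 (fun r => f (join a l r)))) =
  /3 * sum3 (fun a => Ex n (fun l => Ex n (fun r => f (join a l r))))).
have E1 : forall a, Ex n.+1 (fun l => Ex n.+1 (fun r => f (join a l r))) =
   Ex n (fun l => Ex n (fun r => f (join a l r))).
  by move=> a; rewrite -outer; apply: Ex_congr => l; apply: inner.
by rewrite /sum3 !E1.
Qed.

Lemma detm_mono n m f : detm n f -> (n <= m)%N -> detm m f.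
Proof. move=> H Hnm t s Ha; apply: H => v Hv; apply: Ha; exact: leq_trans Hv Hnm. Qed.

Lemma Ex_ext_le n m f : detm n f -> (n <= m)%N -> Ex m f = Ex n f.
Proof.
move=> H; elim: m => [|m IH]; first by rewrite leqn0 => /eqP ->.
rewrite leq_eqVlt => /orP [/eqP <- //|Hlt].
rewrite Ex_S; first exact: IH.
exact: detm_mono H Hlt.
Qed.

Lemma Ind_T (P : Prop) : P -> Ind P = 1.
Proof. by rewrite /Ind; case: excluded_middle_informative. Qed.
Lemma Ind_F (P : Prop) : ~ P -> Ind P = 0.
Proof. by rewrite /Ind; case: excluded_middle_informative. Qed.
Lemma Ind_iff (P P' : Prop) : (P <-> P') -> Ind P = Ind P'.
Proof.
rewrite /Ind => H; do 2 case: excluded_middle_informative; intros; simpl; first [ring | exfalso; tauto].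
Qed.
Lemma Ind_and (P P' : Prop) : Ind (P /\ P') = Ind P * Ind P'.
Proof.
rewrite /Ind; do 3 case: excluded_middle_informative; intros; simpl; first [ring | exfalso; tauto].
Qed.
Lemma Ind_not (P : Prop) : Ind (~ P) = 1 - Ind P.
Proof. rewrite /Ind; do 2 case: excluded_middle_informative; intros; simpl; first [ring | exfalso; tauto]. Qed.
Lemma Ind_ge0 P : 0 <= Ind P.
Proof. rewrite /Ind; case: excluded_middle_informative => _ /=; lra. Qed.
Lemma Ind_le1 P : Ind P <= 1.
Proof. rewrite /Ind; case: excluded_middle_informative => _ /=; lra. Qed.

Lemma w_pos n : 0 < w n.
Proof. apply: Rinv_0_lt_compat; apply: pow_lt; lra. Qed.

Lemma w0 : w 0 = 1.
Proof. by rewrite /w /= Rinv_1. Qed.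

Lemma wS n : w n.+1 = /3 * w n * w n.
Proof.
rewrite /w.
have -> : (2 ^ n.+1 - 1 = 1 + (2 ^ n - 1) + (2 ^ n - 1))%N.
  have : (0 < 2 ^ n)%N by rewrite expn_gt0.
  rewrite expnS; lia.
rewrite !pow_add /=. field; repeat split; apply: pow_nonzero; lra.
Qed.

Definition cylb n g := fun t : Tr => cyl n g t.

Lemma Ex_cyl n g : Ex n (fun t => Ind (cyl n g t)) = w n.
Proof.
elim: n g => [|n IH] g.
  by rewrite /= w0 Ind_T.
have key : forall a l r, Ind (cyl n.+1 g (join a l r)) =
   Ind (a = g [::]) * Ind (cyl n (subt dirL g) l) * Ind (cyl n (subt dirR g) r).
  move=> a l r; rewrite -!Ind_and; apply: Ind_iff; split.
    move=> H; split; first split.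
    - exact: (H [::]).
    - by move=> v Hv; apply: (H (dirL :: v)).
    - by move=> v Hv; apply: (H (dirR :: v)).
  by move=> [[Ha Hl] Hr] [|[] v] //= Hv; [apply: Hl|apply: Hr].
rewrite /=.
have E1 : forall a, Ex n (fun l => Ex n (fun r => Ind (cyl n.+1 g (join a l r)))) =
   Ind (a = g [::]) * w n * w n.
  move=> a.
  rewrite (Ex_congr n _ (fun l => (Ind (a = g [::]) * w n) * Ind (cyl n (subt dirL g) l))).
    by rewrite Ex_scal IH.
  move=> l; rewrite (Ex_congr n _ (fun r => (Ind (a = g [::]) * Ind (cyl n (subt dirL g) l)) * Ind (cyl n (subt dirR g) r))).
    rewrite Ex_scal IH; ring.
  by move=> r; rewrite key.
rewrite /sum3 !E1 wS.
case: (g [::]) => [[]|].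
- rewrite (@Ind_F (None = _)) // (@Ind_T (Some true = _)) // (@Ind_F (Some false = _)) //; ring.
- rewrite (@Ind_F (None = _)) // (@Ind_F (Some true = _)) // (@Ind_T (Some false = _)) //; ring.
- rewrite (@Ind_T (None = _)) // (@Ind_F (Some true = _)) // (@Ind_F (Some false = _)) //; ring.
Qed.

Definition K m (t : Tr) := forall v : vertex, (size v <= m)%N -> run t v <> Some false.

Lemma run_abs b t v : run_from (Some b) t v = Some b.
Proof. by elim: v t => [|D v IH] t //=. Qed.

Lemma run_agree v q (t s : Tr) : (forall u : vertex, (size u < size v)%N -> t u = s u) ->
  run_from q t v = run_from q s v.
Proof.
elim: v q t s => [|D v IH] q t s H //=.
rewrite (H [::]) //; apply: IH => u Hu; apply: (H (D :: u)); by [].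
Qed.

Lemma K_det n t s : agree n t s -> K n t -> K n s.
Proof.
move=> Ha Hk v Hv; rewrite /run -(@run_agree v None t s); first exact: Hk.
move=> u Hu; apply: Ha; exact: leq_trans Hu Hv.
Qed.

Lemma K_dec n t : K n.+1 t -> K n t.
Proof. move=> H v Hv; apply: H; exact: leqW. Qed.

Lemma K_dec_le n m t : (n <= m)%N -> K m t -> K n t.
Proof.
elim: m => [|m IH]; first by rewrite leqn0 => /eqP ->.
rewrite leq_eqVlt => /orP [/eqP -> //|Hlt] H; apply: IH => //; exact: K_dec.
Qed.

Lemma K0 t : K 0 t.
Proof. by move=> [|D v]. Qed.

Lemma K_join n a l r : K n.+1 (join a l r) <->
  (a = Some true \/ (a = None /\ K n l /\ K n r)).
Proof.
split.
- move=> H; case: a H => [[]|] H; first by left.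
  + by case: (H [:: dirL]) => //=; rewrite /run /=.
  + right; split=> //; split=> v Hv.
    * by have := H (dirL :: v) Hv.
    * by have := H (dirR :: v) Hv.
- move=> [->|[-> [Hl Hr]]] [|[] v] //= Hv; rewrite /run /=.
  + by rewrite run_abs.
  + by rewrite run_abs.
  + exact: Hl.
  + exact: Hr.
Qed.

Lemma detm_K n : detm n (fun t => Ind (K n t)).
Proof.
move=> t s H; apply: Ind_iff; split; first exact: K_det.
apply: K_det => v Hv; symmetry; exact: H.
Qed.

Definition y m := Ex m (fun t => Ind (K m t)).

Lemma y0 : y 0 = 1.
Proof. by rewrite /y /= Ind_T //; exact: K0. Qed.

Lemma yS m : y m.+1 = /3 * (y m * y m + 1).
Proof.
rewrite /y /= /sum3.
have E1 : Ex m (fun l => Ex m (fun r => Ind (K m.+1 (join None l r)))) =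
  y m * y m.
  rewrite (Ex_congr m _ (fun l => y m * Ind (K m l))).
    by rewrite Ex_scal.
  move=> l; rewrite (Ex_congr m _ (fun r => Ind (K m l) * Ind (K m r))).
    rewrite Ex_scal /y; ring.
  move=> r; rewrite -Ind_and; apply: Ind_iff; rewrite K_join; split.
    by case=> // [[_ H]].
  by move=> H; right.
have E2 : Ex m (fun l => Ex m (fun r => Ind (K m.+1 (join (Some true) l r)))) = 1.
  rewrite (Ex_congr m _ (fun _ => 1)) ?Ex_const //.
  move=> l; rewrite (Ex_congr m _ (fun _ => 1)) ?Ex_const //.
  by move=> r; rewrite Ind_T // K_join; left.
have E3 : Ex m (fun l => Ex m (fun r => Ind (K m.+1 (join (Some false) l r)))) = 0.
  rewrite (Ex_congr m _ (fun _ => 0)) ?Ex_const //.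
  move=> l; rewrite (Ex_congr m _ (fun _ => 0)) ?Ex_const //.
  by move=> r; rewrite Ind_F // K_join; case=> // [[]].
rewrite E1 E2 E3 /y; ring.
Qed.

Definition rho := (3 - sqrt 5) / 2.

Lemma sqrt5 : sqrt 5 * sqrt 5 = 5 /\ 2 < sqrt 5 < 3.
Proof.
have h := sqrt_sqrt 5 ltac:(lra).
have h0 := sqrt_pos 5.
split=> //; split; nra.
Qed.

Lemma rho_eq : rho = /3 * (rho * rho + 1).
Proof. have [h _] := sqrt5; rewrite /rho. field_simplify; nra. Qed.

Lemma rho_bounds : 0 < rho < 1/2.
Proof. have [_ h] := sqrt5; rewrite /rho; lra. Qed.

Lemma y_bounds m : rho <= y m <= 1 /\ y m - rho <= (1/2) ^ m.
Proof.
have [r0 r1] := rho_bounds; have re := rho_eq.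
elim: m => [|m [[IH1 IH2] IH3]]; first by rewrite y0 /=; lra.
rewrite yS /=.
split; first split; nra.
Qed.

Lemma y_lim eps : 0 < eps -> exists m, y m - rho < eps.
Proof.
move=> he; have [N HN] := pow_lt_1_zero (1/2) ltac:(rewrite Rabs_pos_eq; lra) eps he.
exists N; have [_ h] := y_bounds N.
have := HN N (Nat.le_refl _); rewrite Rabs_pos_eq; first lra.
apply: pow_le; lra.
Qed.

Lemma half_pow eps : 0 < eps -> exists M, (1/2) ^ M < eps.
Proof.
move=> he; have [N HN] := pow_lt_1_zero (1/2) ltac:(rewrite Rabs_pos_eq; lra) eps he.
exists N; have := HN N (Nat.le_refl _); rewrite Rabs_pos_eq //; apply: pow_le; lra.
Qed.

Lemma no_int_sol : forall n : nat, forall p q : Z, (0 < q)%Z -> (q <= Z.of_nat n)%Z ->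
  (p * p - 3 * p * q + q * q <> 0)%Z.
Proof.
elim=> [|n IH] p q Hq Hqn Heq; first lia.
have [a [e [He Hp]]] : exists a e, (e = 0 \/ e = 1)%Z /\ p = (2 * a + e)%Z.
  exists (p / 2)%Z, (p mod 2)%Z; split; [|apply: Z.div_mod; lia].
  have := Z.mod_pos_bound p 2; lia.
have [b [f [Hf Hq']]] : exists b f, (f = 0 \/ f = 1)%Z /\ q = (2 * b + f)%Z.
  exists (q / 2)%Z, (q mod 2)%Z; split; [|apply: Z.div_mod; lia].
  have := Z.mod_pos_bound q 2; lia.
subst p q.
case: He => ?; case: Hf => ?; subst e f.
- apply: (IH a b); try lia; nia.
- ring_simplify in Heq; lia.
- ring_simplify in Heq; lia.
- ring_simplify in Heq; lia.
Qed.

Lemma rho_irr : irrational rho.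
Proof.
move=> [p [q Hpq]].
have re := rho_eq.
have hq : IZR (Z.pos q) <> 0 by apply: not_0_IZR.
have : IZR (p * p - 3 * p * Z.pos q + Z.pos q * Z.pos q) = 0.
  rewrite plus_IZR minus_IZR !mult_IZR.
  rewrite Hpq in re.
  have : IZR p * IZR p - 3 * IZR p * IZR (Z.pos q) + IZR (Z.pos q) * IZR (Z.pos q) =
    IZR (Z.pos q) * IZR (Z.pos q) * ((IZR p / IZR (Z.pos q)) * (IZR p / IZR (Z.pos q)) - 3 * (IZR p / IZR (Z.pos q)) + 1).
    by field.
  move=> ->. have -> : IZR p / IZR (Z.pos q) * (IZR p / IZR (Z.pos q)) - 3 * (IZR p / IZR (Z.pos q)) + 1 = 0 by lra.
  ring.
move/eq_IZR; apply: (no_int_sol (Pos.to_nat q)); lia.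
Qed.

Fixpoint pats (n : nat) : list Tr :=
  match n with 0%N => [:: t0]
  | n'.+1 => List.flat_map (fun a => List.flat_map (fun l =>
        List.map (fun r => join a l r) (pats n')) (pats n')) [:: None; Some true; Some false]
  end.

Lemma pats_ex n t : exists p, List.In p (pats n) /\ agree n t p.
Proof.
elim: n t => [|n IH] t.
  exists t0; split; [by left | by move=> v].
have [pl [Hl Al]] := IH (subt dirL t); have [pr [Hr Ar]] := IH (subt dirR t).
exists (join (t [::]) pl pr); split.
  apply/List.in_flat_map; exists (t [::]); split.
    by case: (t [::]) => [[]|] /=; tauto.
  apply/List.in_flat_map; exists pl; split=> //; exact: List.in_map.
move=> [|[] v] //= Hv; [exact: Al | exact: Ar].
Qed.

Lemma agree_sym n t s : agree n t s -> agree n s t.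
Proof. by move=> H v Hv; rewrite H. Qed.
Lemma agree_trans n t s u : agree n t s -> agree n s u -> agree n t u.
Proof. by move=> H1 H2 v Hv; rewrite H1 // H2. Qed.
Lemma agree_mono n m t s : (n <= m)%N -> agree m t s -> agree n t s.
Proof. by move=> Hnm H v Hv; apply: H; exact: leq_trans Hv Hnm. Qed.

Lemma pigeon (X : Type) (l : list X) (Qm : nat -> X -> Prop) :
  (forall M, exists m, (M <= m)%N /\ exists x, List.In x l /\ Qm m x) ->
  exists x, List.In x l /\ forall M, exists m, (M <= m)%N /\ Qm m x.
Proof.
elim: l => [|x l IH] H.
  by have [m [_ [x [[] _]]]] := H 0%N.
case: (classic (forall M, exists m, (M <= m)%N /\ Qm m x)) => Hx.
  by exists x; split => //; left.
have [M0 HM0] : exists M0, forall m, (M0 <= m)%N -> ~ Qm m x.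
  apply: NNPP => C; apply: Hx => M; apply: NNPP => C2; apply: C; exists M => m Hm HQ;
  apply: C2; by exists m.
have [z [Hz Hq]] : exists z, List.In z l /\ forall M, exists m, (M <= m)%N /\ Qm m z.
  apply: IH => M; have [m [Hm [z [[Hzx|Hz] HQ]]]] := H (maxn M M0).
  - subst z; case: (HM0 m) => //; exact: leq_trans (leq_maxr _ _) Hm.
  - exists m; split; [exact: leq_trans (leq_maxl _ _) Hm | by exists z].
by exists z; split => //; right.
Qed.

Section Compact.
Variables (K : nat -> Tr -> Prop) (d : nat -> nat) (ns : nat -> nat) (fs : nat -> Tr).
Hypothesis Kdec : forall j t, K j.+1 t -> K j t.
Hypothesis Kdet : forall j t s, agree (d j) t s -> K j t -> K j s.
Hypothesis Kcov : forall t, (forall j, K j t) -> exists i, cyl (ns i) (fs i) t.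

Lemma Kle j m t : (j <= m)%N -> K m t -> K j t.
Proof.
elim: m => [|m IH]; first by rewrite leqn0 => /eqP ->.
rewrite leq_eqVlt => /orP [/eqP -> //|Hlt] H; apply: IH => //; exact: Kdec.
Qed.

Lemma compact : exists j N, forall t, K j t -> exists i, (i < N)%N /\ cyl (ns i) (fs i) t.
Proof.
apply: NNPP => C.
have Hts : forall m, exists t, K m t /\ forall i, (i < m)%N -> ~ cyl (ns i) (fs i) t.
  move=> m; apply: NNPP => C2; apply: C; exists m, m => t Kt.
  apply: NNPP => C3; apply: C2; exists t; split => // i Hi Hc; apply: C3; by exists i.
pose ts m := epsilon (inhabits t0)
  (fun t => K m t /\ forall i, (i < m)%N -> ~ cyl (ns i) (fs i) t).
have Hts' : forall m, K m (ts m) /\ forall i, (i < m)%N -> ~ cyl (ns i) (fs i) (ts m).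
  move=> m; exact: epsilon_spec (Hts m).
pose inf n p := forall M, exists m, (M <= m)%N /\ agree n (ts m) p.
pose next n p := epsilon (inhabits t0) (fun p' => agree n p' p /\ inf n.+1 p').
have step : forall k p, inf k p -> agree k (next k p) p /\ inf k.+1 (next k p).
  move=> k p Hp; apply: (@epsilon_spec _ (inhabits t0) (fun p' => agree k p' p /\ inf k.+1 p')).
  pose Qm := (fun m p' => agree k.+1 (ts m) p' /\ agree k p' p).
  have Hpg : forall M, exists m, (M <= m)%N /\ exists x, List.In x (pats k.+1) /\ Qm m x.
    move=> M; have [m [Hm Ha]] := Hp M.
    have [p' [Hin Hp']] := pats_ex k.+1 (ts m).
    exists m; split=> //; exists p'; split=> //; split=> //.
    apply: agree_trans (Ha); apply: agree_sym; exact: agree_mono Hp'.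
  have [x [_ Hx]] := @pigeon _ _ _ Hpg.
  exists x; split; first by have [m [_ [_ H]]] := Hx 0%N.
  move=> M; have [m [Hm [H _]]] := Hx M; by exists m.
pose P := fix P k := match k with 0%N => t0 | k'.+1 => next k' (P k') end.
have Pinf : forall k, inf k (P k).
  elim=> [|k IH]; first by move=> M; exists M; split=> // v.
  exact: (step k (P k) IH).2.
have Pagree : forall k, agree k (P k.+1) (P k).
  move=> k; exact: (step k (P k) (Pinf k)).1.
have chain : forall k j, (k <= j)%N -> agree k (P j) (P k).
  move=> k; elim=> [|j IH].
    by rewrite leqn0 => /eqP ->.
  rewrite leq_eqVlt => /orP [/eqP -> //|Hlt].
  apply: agree_trans (IH Hlt); exact: agree_mono (Pagree j).
pose tl : Tr := fun v => P (size v).+1 v.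
have tl_agree : forall k, agree k tl (P k).
  move=> k v Hv; rewrite /tl; symmetry; exact: (chain (size v).+1 k Hv v).
have HK : forall j, K j tl.
  move=> j; have [m [Hm Ha]] := Pinf (d j) j.
  apply: (@Kdet j (ts m)) ; last exact: Kle Hm (Hts' m).1.
  apply: agree_trans Ha _; exact: agree_sym (tl_agree _).
have [i Hc] := @Kcov tl HK.
have [m [Hm Ha]] := Pinf (ns i) i.+1.
apply: ((Hts' m).2 i Hm) => v Hv.
have Hx : agree (ns i) (ts m) tl by apply: agree_trans Ha _; apply: agree_sym; apply: tl_agree.
rewrite Hx //; exact: Hc.
Qed.
End Compact.

Fixpoint sumN (a : nat -> R) (N : nat) : R :=
  match N with 0%N => 0 | N'.+1 => sumN a N' + a N' end.

Lemma sumN_ext_lt a b N : (forall i, (i < N)%N -> a i = b i) -> sumN a N = sumN b N.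
Proof. elim: N => [|N IH] H //=; rewrite IH ?H // => i Hi; apply: H; exact: ltnW. Qed.

Lemma sumN_le a b N : (forall i, a i <= b i) -> sumN a N <= sumN b N.
Proof. move=> H; elim: N => [|N IH] /=; first lra. have := H N; lra. Qed.

Lemma sumN_ge0 a N : (forall i, 0 <= a i) -> 0 <= sumN a N.
Proof. move=> H; elim: N => [|N IH] /=; first lra. have := H N; lra. Qed.

Lemma sumN_term a N i : (forall i, 0 <= a i) -> (i < N)%N -> a i <= sumN a N.
Proof.
move=> H; elim: N => [|N IH] //= Hi.
have := @sumN_ge0 a N H.
rewrite ltnS leq_eqVlt in Hi; case/orP: Hi => [/eqP ->|Hi]; first lra.
have := IH Hi; have := H N; lra.
Qed.

Lemma Ex_sumN D (g : nat -> Tr -> R) N :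
  Ex D (fun t => sumN (fun i => g i t) N) = sumN (fun i => Ex D (g i)) N.
Proof.
elim: N => [|N IH] /=; first by rewrite Ex_const.
by rewrite Ex_plus IH.
Qed.

Fixpoint maxN (ns : nat -> nat) N := match N with 0%N => 0%N | N'.+1 => maxn (maxN ns N') (ns N') end.
Lemma maxN_ge ns N i : (i < N)%N -> (ns i <= maxN ns N)%N.
Proof.
elim: N => [|N IH] //=; rewrite ltnS leq_eqVlt => /orP [/eqP ->|Hi].
  exact: leq_maxr.
exact: leq_trans (IH Hi) (leq_maxl _ _).
Qed.

Lemma card3 : INR #|(option bool : finType)| = 3.
Proof. rewrite card_option card_bool /=; lra. Qed.

Lemma psum_eq ns N : psum (option bool) ns N = sumN (fun i => w (ns i)) N.
Proof. elim: N => [|N IH] //=; by rewrite IH /cyl_weight card3. Qed.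

Lemma detm_cyl n g : detm n (fun t => Ind (cyl n g t)).
Proof.
move=> t s H; apply: Ind_iff; split=> Hc v Hv; rewrite -Hc //; [symmetry|]; exact: H.
Qed.

Lemma lower (K : nat -> Tr -> Prop) (d : nat -> nat) ns fs :
  (forall j t, K j.+1 t -> K j t) ->
  (forall j t s, agree (d j) t s -> K j t -> K j s) ->
  (forall t, (forall j, K j t) -> exists i, cyl (ns i) (fs i) t) ->
  exists j N, Ex (d j) (fun t => Ind (K j t)) <= psum (option bool) ns N.
Proof.
move=> Kdec Kdet Kcov.
have [j [N HN]] := @compact K d ns fs Kdec Kdet Kcov.
exists j, N.
pose D := maxn (d j) (maxN ns N).
have detK : detm (d j) (fun t => Ind (K j t)).
  move=> t s H; apply: Ind_iff; split; first exact: Kdet.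
  apply: Kdet; exact: agree_sym.
rewrite -(@Ex_ext_le (d j) D _ detK (leq_maxl (d j) (maxN ns N))) psum_eq.
apply: Rle_trans (@Ex_le D _ (fun t => sumN (fun i => Ind (cyl (ns i) (fs i) t)) N) _) _.
  move=> t; rewrite /Ind; case: excluded_middle_informative => Hk /=.
    have [i [Hi Hc]] := HN t Hk.
    have := @sumN_term (fun i => Ind (cyl (ns i) (fs i) t)) N i (fun i => Ind_ge0 _) Hi.
    by rewrite /= (@Ind_T _ Hc).
  apply: sumN_ge0 => i; exact: Ind_ge0.
rewrite Ex_sumN; right; apply: sumN_ext_lt => i Hi.
rewrite (@Ex_ext_le (ns i) D _ (detm_cyl (ns i) (fs i))) ?Ex_cyl //.
apply: leq_trans (@maxN_ge ns N i Hi) (leq_maxr _ _).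
Qed.

Definition Pb (P : Prop) : bool := if excluded_middle_informative P then true else false.
Lemma Pb_true P : Pb P = true <-> P.
Proof. rewrite /Pb; case: excluded_middle_informative => //=; tauto. Qed.

Definition sumR {X : Type} (f : X -> R) (s : list X) : R :=
  List.fold_right (fun x acc => f x + acc) 0 s.

Lemma sumR_cons {X} (f : X -> R) x s : sumR f (x :: s) = f x + sumR f s.
Proof. by []. Qed.
Lemma sumR_nil {X} (f : X -> R) : sumR f [::] = 0.
Proof. by []. Qed.

Lemma sumR_app {X} (f : X -> R) s1 s2 : sumR f (s1 ++ s2) = sumR f s1 + sumR f s2.
Proof.
elim: s1 => [|x s IH]; first by rewrite sumR_nil Rplus_0_l.
by rewrite cat_cons !sumR_cons IH Rplus_assoc.
Qed.

Lemma sumR_flat_map {X Y} (f : Y -> R) (g : X -> list Y) s :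
  sumR f (List.flat_map g s) = sumR (fun x => sumR f (g x)) s.
Proof. elim: s => [|x s IH] //. by rewrite (_ : List.flat_map g (x :: s) = g x ++ List.flat_map g s) // sumR_app IH. Qed.

Lemma sumR_map {X Y} (f : Y -> R) (h : X -> Y) s :
  sumR f (List.map h s) = sumR (fun x => f (h x)) s.
Proof. elim: s => [|x s IH] //. by rewrite (_ : List.map h (x :: s) = h x :: List.map h s) // !sumR_cons IH. Qed.

Lemma sumR_scal {X} c (f : X -> R) s : sumR (fun x => c * f x) s = c * sumR f s.
Proof. elim: s => [|x s IH]; rewrite ?sumR_nil ?sumR_cons; [ring|]. rewrite IH; ring. Qed.

Lemma sumR_const {X} c (s : list X) : sumR (fun _ => c) s = c * INR (length s).
Proof. elim: s => [|x s IH]; rewrite ?sumR_nil ?sumR_cons; [simpl; ring|]. rewrite IH (_ : length (x :: s) = S (length s)) // S_INR; ring. Qed.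

Lemma sumR_Ind (P : Tr -> Prop) s :
  sumR (fun p => Ind (P p)) s = INR (length (List.filter (fun p => Pb (P p)) s)).
Proof.
elim: s => [|x s IH] //. rewrite sumR_cons IH /Ind /Pb /=.
case: excluded_middle_informative => _ /=; last ring.
case: (length _) => [|k] /=; ring.
Qed.

Lemma sumR_ge0 {X} (f : X -> R) s : (forall x, 0 <= f x) -> 0 <= sumR f s.
Proof. move=> H; elim: s => [|x s IH]; rewrite ?sumR_nil ?sumR_cons; [lra|]. have := H x; lra. Qed.

Lemma sumR_congr {X} (f g : X -> R) s : (forall x, f x = g x) -> sumR f s = sumR g s.
Proof. by move=> H; rewrite (functional_extensionality f g H). Qed.

Lemma Ex_sum n f : Ex n f = w n * sumR f (pats n).
Proof.
elim: n f => [|n IH] f.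
  by rewrite /= w0 /sumR /=; ring.
change (Ex n.+1 f) with (/3 * sum3 (fun a => Ex n (fun l => Ex n (fun r => f (join a l r))))).
change (pats n.+1) with (List.flat_map (fun a => List.flat_map (fun l =>
        List.map (fun r => join a l r) (pats n)) (pats n)) [:: None; Some true; Some false]).
rewrite sumR_flat_map.
have E1 : forall a, Ex n (fun l => Ex n (fun r => f (join a l r))) =
   w n * w n * sumR (fun l => sumR (fun r => f (join a l r)) (pats n)) (pats n).
  move=> a; rewrite IH.
  rewrite (functional_extensionality (fun l => Ex n (fun r => f (join a l r)))
     (fun l => w n * sumR (fun r => f (join a l r)) (pats n))); last by move=> l; apply: IH.
  rewrite sumR_scal; ring.
rewrite !sumR_cons sumR_nil; cbv beta; rewrite !sumR_flat_map; cbv beta.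
under [in X in _ = _ * (X + _)]sumR_congr => l do rewrite sumR_map.
under [in X in _ = _ * (_ + (X + _))]sumR_congr => l do rewrite sumR_map.
under [in X in _ = _ * (_ + (_ + (X + _)))]sumR_congr => l do rewrite sumR_map.
rewrite /sum3 !E1 wS. ring.
Qed.

Lemma y_len m : y m = w m * INR (length (List.filter (fun p => Pb (K m p)) (pats m))).
Proof. by rewrite /y Ex_sum sumR_Ind. Qed.

Lemma sumN_plus a b N : sumN (fun i => a i + b i) N = sumN a N + sumN b N.
Proof. elim: N => [|N IH] /=; [ring | rewrite IH; ring]. Qed.

Lemma sumN_S a N : sumN a N.+1 = sumN a N + a N.
Proof. by []. Qed.

Lemma sumN_ind c S N : 0 <= c -> sumN (fun i => if (i < S)%N then c else 0) N <= c * INR S.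
Proof.
move=> Hc.
have : sumN (fun i => if (i < S)%N then c else 0) N = c * INR (Nat.min N S).
  elim: N => [|N IH]; first by rewrite Nat.min_0_l /=; ring.
  rewrite sumN_S IH; case: ifP => HN.
  - have /ltP HN' := HN. rewrite !Nat.min_l; try lia. rewrite S_INR; ring.
  - have HN' : (S <= N)%coq_nat by apply/leP; rewrite leqNgt HN.
    rewrite !Nat.min_r; try lia. ring.
move=> ->; apply: Rmult_le_compat_l => //; apply: le_INR; lia.
Qed.

Lemma sumN_geo M N : sumN (fun i => (1/2) ^ (S (M + i)%N)) N = (1/2)^M - (1/2)^(M + N)%N.
Proof.
elim: N => [|N IH] /=; first by rewrite addn0 Rminus_diag.
rewrite IH addnS; move: (addn M N) => k /=; move: ((1/2)^M) ((1/2)^k) => a b; field.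
Qed.

Lemma w_le_half n : w n <= (1/2)^n.
Proof.
have : w n <= (1/2)^n /\ (1/2)^n <= 1.
  elim: n => [|n [IH1 IH2]]; first by rewrite w0 /=; lra.
  have := w_pos n; rewrite wS /=; split; nra.
by case.
Qed.

Lemma lang_K t : lang Aut t <-> forall j, K j t.
Proof.
rewrite accept_iff; split.
  by move=> H j v _ Hv; apply: H; exists v.
by move=> H [x Hx]; apply: (H (size x) x (leqnn _)).
Qed.

Lemma upper_L eps : 0 < eps -> exists ns fs, covers (lang Aut) ns fs /\
   forall N, psum (option bool) ns N <= rho + eps.
Proof.
move=> he.
have [m Hm] := y_lim (eps / 2) ltac:(lra).
have [M HM] := half_pow (eps / 2) ltac:(lra).
pose G := List.filter (fun p => Pb (K m p)) (pats m).
exists (fun i => if (i < length G)%N then m else S (M + i)%N), (fun i => List.nth i G t0).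
split.
  move=> t /lang_K Ht.
  have [p [Hin Ha]] := pats_ex m t.
  have Hp : List.In p G.
    apply/List.filter_In; split=> //; apply/Pb_true; exact: K_det Ha (Ht m).
  have [i [Hi Hnth]] := List.In_nth _ _ t0 Hp.
  exists i; have -> : (i < length G)%N by apply/ltP.
  by rewrite Hnth.
move=> N; rewrite psum_eq.
apply: Rle_trans (@sumN_le _ (fun i => (if (i < length G)%N then w m else 0) + (1/2) ^ (S (M + i)%N)) N _) _.
  move=> i; have := w_pos (S (M + i)%N); have := w_le_half (S (M + i)%N); have := w_pos m.
  have : 0 < (1/2) ^ (S (M + i)%N) by apply: pow_lt; lra.
  case: ifP => _; lra.
rewrite sumN_plus sumN_geo.
have := @sumN_ind (w m) (length G) N (Rlt_le _ _ (w_pos m)).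
have := y_len m; rewrite -/G.
have : 0 < (1/2)^(M + N)%N by apply: pow_lt; lra.
lra.
Qed.

Lemma run_none v (t : Tr) : (forall u : vertex, (size u < size v)%N -> t u = None) ->
  run_from None t v = None.
Proof.
elim: v t => [|D v IH] t H //=.
rewrite (H [::]) //=; apply: IH => u Hu; exact: (H (D :: u)).
Qed.

Definition B k := List.filter (fun p => Pb (K k p /\ ~ K k.+1 p)) (pats k.+1).

Lemma B_ne k : exists p, List.In p (B k).
Proof.
pose bk : Tr := fun v => if (size v < k)%N then None else Some false.
have Hk : K k bk.
  move=> v Hv; rewrite /run run_none // => u Hu; rewrite /bk.
  by rewrite (leq_trans Hu Hv).
have Hk1 : ~ K k.+1 bk.
  move=> H; apply: (H (rcons (nseq k dirL) dirL)).
    by rewrite size_rcons size_nseq.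
  rewrite /run run_rcons run_none; last first.
    move=> u Hu; rewrite /bk; rewrite size_nseq in Hu; by rewrite Hu.
  by rewrite /bk size_nseq ltnn.
have [p [Hin Ha]] := pats_ex k.+1 bk.
exists p; apply/List.filter_In; split=> //; apply/Pb_true; split.
  apply: K_det Hk; exact: agree_mono (leqnSn k) Ha.
by move=> Hp; apply: Hk1; apply: K_det Hp; apply: agree_sym.
Qed.

Definition LL k := List.map (fun p => (k.+1, p)) (B k).
Definition Flat N := List.flat_map LL (List.seq 0 N).
Definition dflt : nat * Tr := (0%N, t0).
Definition F i := List.nth i (Flat i.+1) dflt.

Lemma Flat_S N : Flat N.+1 = (Flat N ++ LL N)%list.
Proof.
by rewrite /Flat List.seq_S List.flat_map_app /= List.app_nil_r.
Qed.

Lemma Flat_len N : (N <= length (Flat N))%coq_nat.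
Proof.
elim: N => [|N IH] /=; first lia.
rewrite Flat_S List.length_app.
have [p Hp] := B_ne N.
have : (0 < length (LL N))%coq_nat.
  rewrite /LL List.length_map; case: (B N) Hp => [|? ?] //= _; lia.
lia.
Qed.

Lemma Flat_prefix a b : (a <= b)%coq_nat -> exists rest, Flat b = (Flat a ++ rest)%list.
Proof.
move=> Hab; exists (List.flat_map LL (List.seq a (b - a))).
rewrite /Flat -List.flat_map_app.
have {1}-> : b = (a + (b - a))%coq_nat by lia.
by rewrite List.seq_app.
Qed.

Lemma Flat_nth i a b : (i < length (Flat a))%coq_nat -> (a <= b)%coq_nat ->
  List.nth i (Flat b) dflt = List.nth i (Flat a) dflt.
Proof.
move=> Hi Hab; have [rest ->] := @Flat_prefix a b Hab; exact: List.app_nth1.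
Qed.

Lemma F_eq i N : (i < N)%coq_nat -> F i = List.nth i (Flat N) dflt.
Proof.
move=> H; rewrite /F (@Flat_nth i i.+1 N) //.
have := Flat_len i.+1; lia.
Qed.

Lemma sumN_nth_le (g : nat * Tr -> R) s N : (forall x, 0 <= g x) ->
  (N <= length s)%coq_nat -> sumN (fun i => g (List.nth i s dflt)) N <= sumR g s.
Proof.
move=> Hg; elim: s N => [|x s IH] N HN.
  have -> : N = 0%N by rewrite /= in HN; lia.
  rewrite /= /sumR /=; lra.
case: N HN => [|N] HN.
  exact: (@sumR_ge0 _ g (x :: s) Hg).
have shift : forall (h : nat -> R) n, sumN h n.+1 = h 0%N + sumN (fun i => h i.+1) n.
  move=> h; elim=> [|n IHn] /=; first ring.
  rewrite -/(sumN h n.+1) IHn; ring.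
rewrite shift sumR_cons /=.
have := IH N ltac:(rewrite /= in HN; lia); lra.
Qed.

Lemma Ind_diff (P Q : Prop) : (Q -> P) -> Ind (P /\ ~ Q) = Ind P - Ind Q.
Proof.
move=> H; rewrite /Ind; do 3 case: excluded_middle_informative; intros; simpl;
  first [ring | exfalso; tauto].
Qed.

Lemma LL_sum k : sumR (fun pr : nat * Tr => w pr.1) (LL k) = y k - y k.+1.
Proof.
rewrite /LL sumR_map /= sumR_const.
have : Ex k.+1 (fun p => Ind (K k p /\ ~ K k.+1 p)) = y k - y k.+1.
  rewrite (Ex_congr k.+1 _ (fun p => Ind (K k p) - Ind (K k.+1 p))); last first.
    by move=> p; apply: Ind_diff; exact: K_dec.
  by rewrite Ex_minus Ex_S //; exact: detm_K.
by rewrite Ex_sum sumR_Ind -/(B k) Rmult_comm.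
Qed.

Lemma Flat_sum N : sumR (fun pr : nat * Tr => w pr.1) (Flat N) = 1 - y N.
Proof.
elim: N => [|N IH]; first by rewrite y0 /Flat /sumR /=; ring.
rewrite Flat_S sumR_app IH LL_sum; ring.
Qed.

Lemma first_fail t n : ~ K n t -> exists k, K k t /\ ~ K k.+1 t.
Proof.
elim: n => [|n IH] H; first by case: H; exact: K0.
case: (classic (K n t)) => Hn; first by exists n.
exact: IH.
Qed.

Lemma upper_C eps : 0 < eps -> exists ns fs, covers (fun t => ~ lang Aut t) ns fs /\
   forall N, psum (option bool) ns N <= 1 - rho + eps.
Proof.
move=> he; exists (fun i => (F i).1), (fun i => (F i).2); split.
  move=> t Ht.
  have [x Hx] : exists x, run t x = Some false.
    by apply: NNPP => C; apply: Ht; apply/accept_iff.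
  have [k [Hk Hk1]] : exists k, K k t /\ ~ K k.+1 t.
    apply: (@first_fail t (size x)) => H; exact: (H x (leqnn _) Hx).
  have [p [Hin Ha]] := pats_ex k.+1 t.
  have HB : List.In p (B k).
    apply/List.filter_In; split=> //; apply/Pb_true; split.
      apply: K_det Hk; exact: agree_mono (leqnSn k) Ha.
    by move=> Hp; apply: Hk1; apply: K_det Hp; apply: agree_sym.
  have HF : List.In (k.+1, p) (Flat k.+1).
    apply/List.in_flat_map; exists k; split.
      apply/List.in_seq; lia.
    exact: (List.in_map (fun p => (k.+1, p))).
  have [i [Hi Hnth]] := List.In_nth _ _ dflt HF.
  exists i.
  have -> : F i = (k.+1, p).
    rewrite (@F_eq i (Nat.max i.+1 k.+1)); last lia.
    rewrite (@Flat_nth i k.+1) //; lia.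
  exact: Ha.
move=> N; rewrite psum_eq.
have [_ hr] := rho_bounds.
have [[hy _] _] := y_bounds N.
apply: Rle_trans (_ : sumR (fun pr : nat * Tr => w pr.1) (Flat N) <= _); last first.
  rewrite Flat_sum; lra.
rewrite (@sumN_ext_lt _ (fun i => w (List.nth i (Flat N) dflt).1)); last first.
  by move=> i Hi; rewrite (@F_eq i N) //; apply/ltP.
apply: (@sumN_nth_le (fun pr : nat * Tr => w pr.1)).
  move=> pr; exact: Rlt_le _ _ (w_pos _).
exact: Flat_len.
Qed.

Theorem measure_thm : measure_is (lang Aut) rho.
Proof.
split; split.
- move=> ns fs Hcov r' Hr'.
  have [j [N HN]] := @lower K id ns fs K_dec K_det
     (fun t Ht => Hcov t (proj2 (lang_K t) Ht)).
  exists N; have [[hy _] _] := y_bounds j; rewrite /y in hy; simpl in HN; lra.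
- exact: upper_L.
- move=> ns fs Hcov r' Hr'.
  have [m Hm] := y_lim ((1 - rho) - r') ltac:(lra).
  have [j [N HN]] := @lower (fun _ t => ~ K m t) (fun _ => m) ns fs
    (fun _ _ H => H)
    (fun _ t s Ha Hn Hs => Hn (@K_det m s t (@agree_sym m t s Ha) Hs))
    (fun t Ht => Hcov t (fun Hl => Ht 0%N (proj1 (lang_K t) Hl m))).
  exists N.
  have : Ex m (fun t => Ind (~ K m t)) = 1 - y m.
    rewrite (Ex_congr m _ (fun t => 1 - Ind (K m t))); last by move=> t; exact: Ind_not.
    by rewrite Ex_minus Ex_const.
  lra.
- move=> eps he; have [ns [fs [H1 H2]]] := @upper_C eps he; exists ns, fs; split=> // N.
Qed.

Theorem proposition1 :
  exists (Sigma Q : finType) (A : automaton Sigma Q),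
    deterministic A /\
    exists r : R, measure_is (lang A) r /\ irrational r.
Proof.
exists (option bool : finType), (option bool : finType), Aut; split.
  exact: Aut_det.
exists rho; split; [exact: measure_thm | exact: rho_irr].
Qed.
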